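(* Let $\alpha\in(0,1)$. Assume the setting described in the context, and assume: (i) (concentration over calibration data) there exist $\varepsilon_{\mathrm{cal}},\delta_{\mathrm{cal}}\in(0,1)$ such that for every measurable $q:(\mathcal{X}\times\mathcal{Y})^{n_{\mathrm{train}}}\to\mathbb{R}$, \[\mathbb{P}\left[\left|\frac{1}{n_{\mathrm{cal}}}\sum_{i\in I_{\mathrm{cal}}}\mathbf{1}\{\widehat{s}_{\mathrm{train}}(X_i,Y_i)\le q_{\mathrm{train}}\}-P_{q,\mathrm{train}}\right|\le\varepsilon_{\mathrm{cal}}\right]\ge 1-\delta_{\mathrm{cal}};\] (ii) (concentration over test data) there exist $\varepsilon_{\mathrm{test}},\delta_{\mathrm{test}}\in(0,1)$ such that for every measurable $q:(\mathcal{X}\times\mathcal{Y})^{n_{\mathrm{train}}}\to\mathbb{R}$, \[\mathbb{P}\left[\left|P_{q,\mathrm{train}}-\frac{1}{n_{\mathrm{test}}}\sum_{i\in I_{\mathrm{test}}}\mathbf{1}\{\widehat{s}_{\mathrm{train}}(X_i,Y_i)\le q_{\mathrm{train}}\}\right|\le\varepsilon_{\mathrm{test}}\right]\ge 1-\delta_{\mathrm{test}}.\] Let $\eta=\varepsilon_{\mathrm{cal}}+\varepsilon_{\mathrm{test}}$. Then \[\mathbb{P}\left[\frac{1}{n_{\mathrm{test}}}\sum_{i\in I_{\mathrm{test}}}\mathbf{1}\{Y_i\in C_{1-\alpha}(X_i)\}\ge 1-\alpha-\eta\right]\ge 1-\delta_{\mathrm{cal}}-\delta_{\mathrm{test}}.\]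 Additionally, if $\widehat{s}_{\mathrm{train}}(X_*,Y_* )$ almost surely has a continuous distribution conditionally on the training data, then \[\mathbb{P}\left[\left|\frac{1}{n_{\mathrm{test}}}\sum_{i\in I_{\mathrm{test}}}\mathbf{1}\{Y_i\in C_{1-\alpha}(X_i)\}-(1-\alpha)\right|\le\eta\right]\ge 1-2\delta_{\mathrm{cal}}-2\delta_{\mathrm{test}}.\]
   Context: Let $\mathcal{X},\mathcal{Y}$ be measurable spaces. The sample $(X_i,Y_i)_{i=1}^n$ consists of random pairs in $\mathcal{X}\times\mathcal{Y}$, and $(X_*,Y_* )$ is an additional random pair, independent of the sample, with $(X_i,Y_i)\sim(X_*,Y_* )$ for all $i\in\{1,\dots,n\}$. Write $n=n_{\mathrm{train}}+n_{\mathrm{cal}}+n_{\mathrm{test}}$ with positive integers, $I_{\mathrm{train}}=\{1,\dots,n_{\mathrm{train}}\}$, $I_{\mathrm{cal}}=\{n_{\mathrm{train}}+1,\dots,n_{\mathrm{train}}+n_{\mathrm{cal}}\}$, $I_{\mathrm{test}}=\{n_{\mathrm{train}}+n_{\mathrm{cal}}+1,\dots,n\}$. Let $s:(\mathcal{X}\times\mathcal{Y})^{n_{\mathrm{train}}+1}\to\mathbb{R}$ be any (measurable) function and $\widehat{s}_{\mathrm{train}}(x,y)=s((X_i,Y_i)_{i\in I_{\mathrm{train}}},(x,y))$. For $\phi\in[0,1)$, $\widehat{q}_{\phi,\mathrm{cal}}=\inf\{t\in\mathbb{R}:\frac{1}{n_{\mathrm{cal}}}\sum_{i\in I_{\mathrm{cal}}}\mathbf{1}\{\widehat{s}_{\mathrm{train}}(X_i,Y_i)\le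 t\}\ge\phi\}$ and $C_\phi(x)=\{y\in\mathcal{Y}:\widehat{s}_{\mathrm{train}}(x,y)\le\widehat{q}_{\phi,\mathrm{cal}}\}$. For measurable $q:(\mathcal{X}\times\mathcal{Y})^{n_{\mathrm{train}}}\to\mathbb{R}$, $q_{\mathrm{train}}=q((X_i,Y_i)_{i\in I_{\mathrm{train}}})$ and $P_{q,\mathrm{train}}=\mathbb{P}[\widehat{s}_{\mathrm{train}}(X_*,Y_* )\le q_{\mathrm{train}}\mid (X_i,Y_i)_{i\in I_{\mathrm{train}}}]$. *)

(* Defs.v *)
From HB Require Import structures.
From mathcomp Require Import all_boot all_order all_algebra.
From mathcomp Require Import all_classical all_reals all_analysis.
Set Implicit Arguments. Unset Strict Implicit. Unset Printing Implicit Defensive.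
Import Order.TTheory GRing.Theory Num.Theory.
Local Open Scope classical_set_scope.
Local Open Scope ring_scope.

Section SplitConformal.
Context {R : realType} {dO dX dY : measure_display}
  {Omega : measurableType dO} {X : measurableType dX} {Y : measurableType dY}
  {ntrain ncal ntest : nat}.

Definition train_data (Ztr : 'I_ntrain -> Omega -> X * Y) (w : Omega)
  : ntrain.-tuple (X * Y) := [tuple Ztr i w | i < ntrain].

Definition shat (s : ntrain.-tuple (X * Y) -> X * Y -> R)
  (Ztr : 'I_ntrain -> Omega -> X * Y) (w : Omega) (z : X * Y) : R :=
  s (train_data Ztr w) z.

Definition emp_frac m (s : ntrain.-tuple (X * Y) -> X * Y -> R)
  (Ztr : 'I_ntrain -> Omega -> X * Y) (Z : 'I_m -> Omega -> X * Y)
  (w : Omega) (t : R) : R :=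
  m%:R^-1 * \sum_(i < m) ((shat s Ztr w (Z i w) <= t)%R : bool)%:R.

Definition qhat (phi : R) (s : ntrain.-tuple (X * Y) -> X * Y -> R)
  (Ztr : 'I_ntrain -> Omega -> X * Y) (Zcal : 'I_ncal -> Omega -> X * Y)
  (w : Omega) : R :=
  inf [set t : R | phi <= emp_frac s Ztr Zcal w t].

Definition conf_set (phi : R) (s : ntrain.-tuple (X * Y) -> X * Y -> R)
  (Ztr : 'I_ntrain -> Omega -> X * Y) (Zcal : 'I_ncal -> Omega -> X * Y)
  (w : Omega) (x : X) : set Y :=
  [set y | shat s Ztr w (x, y) <= qhat phi s Ztr Zcal w].

(* P_{q,train} = P[ s_hat_train(X_*,Y_* ) <= q_train | training data ].
   Since (X_*,Y_* ) is independent of the sample, this conditional probability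
   is (a version of) the probability over (X_*,Y_* ) with the training data
   frozen at their observed value. *)
Definition Pq_train (P : probability Omega R)
  (s : ntrain.-tuple (X * Y) -> X * Y -> R)
  (Ztr : 'I_ntrain -> Omega -> X * Y) (Zstar : Omega -> X * Y)
  (q : ntrain.-tuple (X * Y) -> R) (w : Omega) : R :=
  fine (P [set w' | s (train_data Ztr w) (Zstar w') <= q (train_data Ztr w)]).

Definition sample_indep (P : probability Omega R)
  (Ztr : 'I_ntrain -> Omega -> X * Y) (Zcal : 'I_ncal -> Omega -> X * Y)
  (Ztest : 'I_ntest -> Omega -> X * Y) (Zstar : Omega -> X * Y) : Prop :=
  forall (A : set ((ntrain.-tuple (X * Y) * ncal.-tuple (X * Y))
                   * ntest.-tuple (X * Y))) (B : set (X * Y)),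
    measurable A -> measurable B ->
    let S := fun w => ((train_data Ztr w, [tuple Zcal i w | i < ncal]),
                        [tuple Ztest i w | i < ntest]) in
    P (S @^-1` A `&` Zstar @^-1` B) = (P (S @^-1` A) * P (Zstar @^-1` B))%E.

Definition same_law (P : probability Omega R) (Z Zstar : Omega -> X * Y) : Prop :=
  forall B : set (X * Y), measurable B -> P (Z @^-1` B) = P (Zstar @^-1` B).

End SplitConformal.

(* Main.v *)
Require Import Defs.
From HB Require Import structures.
From mathcomp Require Import all_boot all_order all_algebra.
From mathcomp Require Import all_classical all_reals all_analysis.
From mathcomp Require Import measurable_realfun lra ring.
Import Order.TTheory GRing.Theory Num.Theory.
Local Open Scope classical_set_scope.
Local Open Scope ring_scope.

Section Emp.
Context {R : realType}.

Definition ef {m} (a : 'I_m -> R) (t : R) : R :=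
  m%:R^-1 * \sum_(i < m) ((a i <= t)%R : bool)%:R.

Lemma ef_mono m (a : 'I_m -> R) t1 t2 : t1 <= t2 -> ef a t1 <= ef a t2.
Proof.
move=> le12; rewrite /ef ler_wpM2l ?invr_ge0 ?ler0n //.
apply: ler_sum => i _.
by case: (leP (a i) t1) => //= h; rewrite (le_trans h le12).
Qed.

Lemma ef_ge0 m (a : 'I_m -> R) t : 0 <= ef a t.
Proof. by rewrite /ef mulr_ge0 ?invr_ge0 ?ler0n // sumr_ge0. Qed.

Lemma ef_le1 m (a : 'I_m -> R) t : (0 < m)%N -> ef a t <= 1.
Proof.
move=> m0.
have hs : \sum_(i < m) ((a i <= t)%R : bool)%:R <= (m%:R : R).
  have -> : (m%:R : R) = \sum_(i < m) (1:R) by rewrite sumr_const card_ord.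
  by apply: ler_sum => i _; rewrite lern1 leq_b1.
have m0' : (m%:R : R) != 0 by rewrite pnatr_eq0 -lt0n.
rewrite /ef [X in _ <= X](_ : 1 = m%:R^-1 * m%:R); last by rewrite mulVf.
by rewrite ler_wpM2l ?invr_ge0 ?ler0n.
Qed.

Lemma ef_all1 m (a : 'I_m -> R) t : (0 < m)%N -> (forall i, a i <= t) -> ef a t = 1.
Proof.
move=> m0 h; rewrite /ef (eq_bigr (fun _ => 1)); last by move=> i _; rewrite h.
by rewrite sumr_const card_ord mulVf // pnatr_eq0 -lt0n.
Qed.

Lemma ef_all0 m (a : 'I_m -> R) t : (forall i, t < a i) -> ef a t = 0.
Proof.
move=> h; rewrite /ef big1 ?mulr0 // => i _.
by rewrite leNgt h.
Qed.

Lemma ef_S m (a : 'I_m -> R) (phi : R) : (0 < m)%N -> 0 < phi <= 1 ->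
  has_lbound [set t | phi <= ef a t] /\ [set t | phi <= ef a t] !=set0.
Proof.
move=> m0 /andP [p0 p1].
have nS i : `|a i| <= \sum_(j < m) `|a j|.
  by rewrite (bigD1 i) //= lerDl sumr_ge0.
split.
- exists (- \sum_(j < m) `|a j| - 1) => t /= Ht.
  rewrite leNgt; apply/negP => tlt.
  have := Ht; rewrite ef_all0 ?leNgt ?p0 // => i.
  have := nS i; rewrite ler_norml => /andP [h1 h2]; lra.
- exists (\sum_(j < m) `|a j|) => /=.
  rewrite ef_all1 // => i.
  by have := nS i; rewrite ler_norml => /andP [h1 h2].
Qed.


Lemma ef_char m (a : 'I_m -> R) (phi : R) : (0 < m)%N -> 0 < phi <= 1 ->
  forall t, (inf [set t | phi <= ef a t] <= t) = (phi <= ef a t).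
Proof.
move=> m0 hp; have [lbS neS] := @ef_S m a phi m0 hp.
have p0 : 0 < phi by case/andP: hp.
have C1 t : phi <= ef a t -> exists j, (phi <= ef a (a j)) && (a j <= t).
  move=> Ht.
  have [[j0 Hj0]|/forallNP H] := pselect (exists j, a j <= t); last first.
    move: Ht; rewrite ef_all0 ?leNgt ?p0 // => i.
    by have := H i; rewrite leNgt => /negP/negbNE.
  case: (@arg_maxP _ _ _ j0 (fun j => a j <= t) a Hj0) => j1 Hj1 Hmax.
  exists j1; rewrite Hj1 andbT.
  have E i : (a i <= a j1) = (a i <= t).
    have [h|h] := boolP (a i <= t); first by apply/idP; exact: Hmax.
    apply/negbTE/negP => h'; apply: (negP h).
    exact: le_trans h' Hj1.
  have -> : ef a (a j1) = ef a t.
    by rewrite /ef; congr (_ * _); apply: eq_bigr => i _; rewrite E.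
  exact: Ht.
have [t1 St1] := neS.
have [j0 /andP [Hj0 _]] := C1 t1 St1.
case: (@arg_minP _ _ _ j0 (fun j => phi <= ef a (a j)) a Hj0) => js Hjs Hmin.
have lbjs : lbound [set t | phi <= ef a t] (a js).
  move=> t /= /C1 [j /andP [Sj jt]].
  exact: le_trans (Hmin _ Sj) jt.
have infE : inf [set t | phi <= ef a t] = a js.
  apply/le_anti/andP; split; first exact: ge_inf.
  exact: lb_le_inf.
move=> t; rewrite infE; apply/idP/idP => h.
  exact: le_trans Hjs (@ef_mono m a _ _ h).
exact: lbjs.
Qed.

End Emp.

Section Aux.
Context {R : realType} {dO dX dY : measure_display}
  {Omega : measurableType dO} {X : measurableType dX} {Y : measurableType dY}
  (P : probability Omega R) (ntrain : nat)
  (Ztr : 'I_ntrain -> Omega -> X * Y) (Zstar : Omega -> X * Y)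
  (s : ntrain.-tuple (X * Y) -> X * Y -> R).
Hypothesis mZtr : forall i, measurable_fun setT (Ztr i).
Hypothesis mZ : measurable_fun setT Zstar.
Hypothesis ms : measurable_fun setT (fun p : ntrain.-tuple (X * Y) * (X * Y) => s p.1 p.2).

Lemma mset_le {d} {T : measurableType d} (f g : T -> R) :
  measurable_fun setT f -> measurable_fun setT g -> measurable [set w | f w <= g w].
Proof.
move=> mf mg; have := measurable_fun_ler mf mg measurableT (Y:=[set true]) I.
by rewrite setTI; congr measurable; apply/seteqP; split => w /=.
Qed.

Lemma mtrain : measurable_fun setT (train_data Ztr).
Proof.
apply/measurable_fun_tnthP => i.
rewrite (_ : _ \o _ = Ztr i); first exact: mZtr.
by apply/funext => w /=; rewrite tnth_mktuple.
Qed.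

Let Zm_mixin := isMeasurableFun.Build _ _ _ _ _ mZ.
Let Zm : {mfun Omega >-> (X * Y)%type} := HB.pack Zstar Zm_mixin.

Lemma mG (q : ntrain.-tuple (X * Y) -> R) : measurable_fun setT q ->
  measurable_fun setT (fun x => P [set w | s x (Zstar w) <= q x]).
Proof.
move=> mq.
have mA : measurable [set p : ntrain.-tuple (X * Y) * (X * Y) | s p.1 p.2 <= q p.1].
  apply: mset_le => //; exact: measurableT_comp.
have := measurable_fun_xsection (distribution P Zm) mA.
congr measurable_fun; apply/funext => x /=.
rewrite /distribution /pushforward /xsection /=.
by congr (P _); apply/seteqP; split => w /=; rewrite inE.
Qed.


Lemma mscore x : measurable_fun setT (fun w => s x (Zstar w)).
Proof.
have -> : (fun w => s x (Zstar w)) =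
  (fun p : ntrain.-tuple (X * Y) * (X * Y) => s p.1 p.2) \o (pair x \o Zstar) by [].
by apply: measurableT_comp => //; apply: measurableT_comp => //.
Qed.

Definition Gm x t := P [set w | s x (Zstar w) <= t].
Definition Fm x t := fine (Gm x t).

Lemma mS x t : measurable [set w | s x (Zstar w) <= t].
Proof. by apply: mset_le; [exact: mscore|exact: measurable_cst]. Qed.

Lemma GE x t : Gm x t = (Fm x t)%:E.
Proof.
rewrite /Fm fineK // ge0_fin_numE ?measure_ge0 //.
by rewrite (le_lt_trans (probability_le1 _ (mS x t))) ?ltey.
Qed.

Lemma F_ge0 x t : 0 <= Fm x t.
Proof. by rewrite -lee_fin -GE measure_ge0. Qed.

Lemma F_le1 x t : Fm x t <= 1.
Proof. by rewrite -lee_fin -GE probability_le1 //; exact: mS. Qed.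

Lemma F_mono x t1 t2 : t1 <= t2 -> Fm x t1 <= Fm x t2.
Proof.
move=> le12; rewrite -lee_fin -!GE; apply: le_measure; rewrite ?inE; try exact: mS.
by move=> w /= h; exact: le_trans h le12.
Qed.

Lemma F_meas (q : ntrain.-tuple (X * Y) -> R) : measurable_fun setT q ->
  measurable_fun setT (fun x => Fm x (q x)).
Proof.
move=> mq; apply: (measurableT_comp (fine_measurable measurableT)).
exact: mG.
Qed.

Lemma F_rc x t c : (forall k, c <= Fm x (t + k.+1%:R^-1)) -> c <= Fm x t.
Proof.
move=> h.
pose A k := [set w | s x (Zstar w) <= t + k.+1%:R^-1].
have mA k : measurable (A k) by exact: mS.
have capE : \bigcap_k A k = [set w | s x (Zstar w) <= t].
  apply/seteqP; split => w /=.
    move=> H; rewrite leNgt; apply/negP => /ltr_add_invr [k Hk].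
    by have := H k I; rewrite /A /= leNgt Hk.
  by move=> H k _; rewrite /A /= (le_trans H) // lerDl invr_ge0 ler0n.
have fin0 : (P (A 0%N) < +oo)%E.
  by rewrite (le_lt_trans (probability_le1 _ (mA 0%N))) ?ltey.
have ni : nonincreasing_seq A.
  move=> n m nm; apply/subsetPset => w; rewrite /A /= => H.
  apply: (le_trans H); rewrite lerD2l lef_pV2 ?posrE ?ltr0n // ler_nat.
  by rewrite ltnS.
have mcap : measurable (\bigcap_k A k) by rewrite capE; exact: mS.
have cv := nonincreasing_cvg_mu fin0 mA mcap ni.
rewrite capE in cv.
have : (c%:E <= Gm x t)%E.
  apply: (cvge_to_ge cv).
  by apply: nearW => k /=; rewrite /A -/(Gm x _) GE lee_fin h.
by rewrite GE lee_fin.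
Qed.


Lemma F_lc x t c : P [set w | s x (Zstar w) = t] = 0%E ->
  (forall k, Fm x (t - k.+1%:R^-1) <= c) -> Fm x t <= c.
Proof.
move=> h0 h.
pose A k := [set w | s x (Zstar w) <= t - k.+1%:R^-1].
have mA k : measurable (A k) by exact: mS.
have cupE : \bigcup_k A k = [set w | s x (Zstar w) < t].
  apply/seteqP; split => w /=.
    by move=> [k _]; rewrite /A /= => H; apply: (le_lt_trans H); rewrite gtrDl oppr_lt0 invr_gt0 ltr0n.
  move=> /ltr_add_invr [k Hk]; exists k => //; rewrite /A /=.
  by rewrite lerBrDr ltW.
have nd : nondecreasing_seq A.
  move=> n m nm; apply/subsetPset => w; rewrite /A /= => H.
  apply: (le_trans H); rewrite lerD2l lerN2 lef_pV2 ?posrE ?ltr0n // ler_nat.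
  by rewrite ltnS.
have mcup : measurable (\bigcup_k A k) by exact: bigcup_measurable.
have cv := nondecreasing_cvg_mu (mu:=P) mA mcup nd.
rewrite cupE in cv mcup.
have h1 : (P [set w | (s x (Zstar w) < t)%R] <= c%:E)%E.
  apply: (cvge_to_le cv).
  by apply: nearW => k /=; rewrite /A -/(Gm x _) GE lee_fin h.
have meq : measurable [set w | s x (Zstar w) = t].
  have := measurable_fun_eqr (mscore x) (measurable_cst t) measurableT (Y:=[set true]) I.
  by rewrite setTI; congr measurable; apply/seteqP; split => w /=; move/eqP.
have : Gm x t = (P [set w | (s x (Zstar w) < t)%R] + P [set w | s x (Zstar w) = t])%E.
  rewrite -measureU //.
    congr (P _); apply/seteqP; split => w /=.
      by rewrite le_eqVlt => /orP [/eqP ->|H]; [right|left].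
    by case => [/ltW|->].
  apply/seteqP; split => w //= [] H1 H2.
  by move: H1; rewrite H2 ltxx.
rewrite h0 adde0 GE => e. rewrite -lee_fin e. exact h1. Qed.


Lemma F_top x c : c < 1 -> exists t, c <= Fm x t.
Proof.
move=> c1; have [//|/forallNP H] := pselect (exists t, c <= Fm x t).
pose A (k : nat) := [set w | s x (Zstar w) <= k%:R].
have mA k : measurable (A k) by exact: mS.
have cupE : \bigcup_k A k = setT.
  apply/seteqP; split => w //= _.
  exists (Num.truncn (s x (Zstar w))).+1 => //; rewrite /A /=.
  exact/ltW/truncnS_gt.
have nd : nondecreasing_seq A.
  move=> n m nm; apply/subsetPset => w; rewrite /A /= => H1.
  by apply: (le_trans H1); rewrite ler_nat.
have mcup : measurable (\bigcup_k A k) by exact: bigcup_measurable.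
have cv := nondecreasing_cvg_mu (mu:=P) mA mcup nd.
rewrite cupE in cv.
have : (P setT <= c%:E)%E.
  apply: (cvge_to_le cv).
  apply: nearW => k /=; rewrite /A -/(Gm x _) GE lee_fin.
  by have := H k%:R; rewrite leNgt => /negP/negbNE/ltW.
by rewrite probability_setT lee_fin leNgt c1.
Qed.

Lemma F_bot x c : 0 < c -> exists t, Fm x t < c.
Proof.
move=> c0; have [//|/forallNP H] := pselect (exists t, Fm x t < c).
pose A (k : nat) := [set w | s x (Zstar w) <= - k%:R].
have mA k : measurable (A k) by exact: mS.
have capE : \bigcap_k A k = set0.
  apply/seteqP; split => w //= H1.
  have := H1 (Num.truncn (- s x (Zstar w))).+1 I; rewrite /A /= lerNr.
  by rewrite leNgt truncnS_gt.
have ni : nonincreasing_seq A.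
  move=> n m nm; apply/subsetPset => w; rewrite /A /= => H1.
  by apply: (le_trans H1); rewrite lerN2 ler_nat.
have fin0 : (P (A 0%N) < +oo)%E.
  by rewrite (le_lt_trans (probability_le1 _ (mA 0%N))) ?ltey.
have mcap : measurable (\bigcap_k A k) by rewrite capE.
have cv := nonincreasing_cvg_mu fin0 mA mcap ni.
rewrite capE measure0 in cv.
have : (c%:E <= 0)%E.
  apply: (cvge_to_ge cv).
  apply: nearW => k /=; rewrite /A -/(Gm x _) GE lee_fin.
  by have := H (- k%:R); rewrite ltNge => /negP/negbNE.
by rewrite lee_fin leNgt c0.
Qed.


Definition Qc c x := inf [set t | c <= Fm x t].

Lemma Q_props c x : 0 < c < 1 ->
  [/\ c <= Fm x (Qc c x), (forall t, t < Qc c x -> Fm x t < c)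
    & (forall t, c <= Fm x t -> Qc c x <= t)].
Proof.
move=> /andP [c0 c1].
have [t0 Ht0] := F_bot x c c0.
have [t1 Ht1] := F_top x c c1.
have lbS : has_lbound [set t | c <= Fm x t].
  exists t0 => t /= Ht; rewrite leNgt; apply/negP => tt0.
  by have := le_lt_trans Ht (le_lt_trans (F_mono x _ _ (ltW tt0)) Ht0); rewrite ltxx.
have h3 : forall t, c <= Fm x t -> Qc c x <= t by move=> t Ht; exact: ge_inf.
split => //.
- apply: F_rc => k.
  have [u Su Hu] : exists2 u, [set t | c <= Fm x t] u & u < Qc c x + k.+1%:R^-1.
    by apply: inf_adherent; [rewrite invr_gt0 ltr0n|split => //; exists t1].
  exact: (le_trans Su (F_mono x _ _ (ltW Hu))).
- move=> t tQ; rewrite ltNge; apply/negP => /h3.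
  by rewrite leNgt tQ.
Qed.

Lemma Q_meas c : 0 < c < 1 -> measurable_fun setT (Qc c).
Proof.
move=> c01; apply: (measurability _ (RGenOInfty.measurableE R)) => //.
move=> /= _ [_ [a ->] <-]; apply: measurableI => //.
have -> : Qc c @^-1` `]a, +oo[%classic = ~` [set x | c <= Fm x a].
  apply/seteqP; split => x /=; rewrite in_itv /= andbT.
    move=> aQ Hc; have [_ _ h3] := Q_props c x c01.
    by have := h3 _ Hc; rewrite leNgt aQ.
  move=> Hc; rewrite ltNge; apply/negP => Qa; apply: Hc.
  have [h1 _ _] := Q_props c x c01.
  exact: (le_trans h1 (F_mono x _ _ Qa)).
apply: measurableC; apply: mset_le; first exact: measurable_cst.
exact: (F_meas (fun _ => a) (measurable_cst a)).
Qed.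


Lemma mind {d} {T : measurableType d} (f g : T -> R) :
  measurable_fun setT f -> measurable_fun setT g ->
  measurable_fun setT (fun w => ((f w <= g w)%R : bool)%:R : R).
Proof.
move=> mf mg.
have -> : (fun w => ((f w <= g w)%R : bool)%:R : R) = \1_[set w | f w <= g w].
  by apply/funext => w; rewrite indicE mem_setE.
exact/measurable_indic/mset_le.
Qed.

Lemma mshat (Z : Omega -> X * Y) : measurable_fun setT Z ->
  measurable_fun setT (fun w => shat s Ztr w (Z w)).
Proof.
move=> mZ'.
have -> : (fun w => shat s Ztr w (Z w)) =
  (fun p : ntrain.-tuple (X * Y) * (X * Y) => s p.1 p.2) \o (fun w => (train_data Ztr w, Z w)) by [].
apply: measurableT_comp => //; apply: measurable_fun_pair => //; exact: mtrain.
Qed.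

Lemma memp m (Z : 'I_m -> Omega -> X * Y) (th : Omega -> R) :
  (forall i, measurable_fun setT (Z i)) -> measurable_fun setT th ->
  measurable_fun setT (fun w => emp_frac s Ztr Z w (th w)).
Proof.
move=> mZi mth; rewrite /emp_frac.
apply: measurable_funM; first exact: measurable_cst.
apply: measurable_sum => i; apply: mind => //; exact: mshat.
Qed.

Lemma mPq (q : ntrain.-tuple (X * Y) -> R) : measurable_fun setT q ->
  measurable_fun setT (Pq_train P s Ztr Zstar q).
Proof.
move=> mq; rewrite /Pq_train.
have -> : (fun w => fine (P [set w' | s (train_data Ztr w) (Zstar w') <= q (train_data Ztr w)]))
  = (fun x => Fm x (q x)) \o train_data Ztr by [].
apply: measurableT_comp; [exact: F_meas | exact: mtrain].
Qed.

Lemma PE A : measurable A -> P A = (fine (P A))%:E.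
Proof.
move=> mA; rewrite fineK // ge0_fin_numE ?measure_ge0 //.
by rewrite (le_lt_trans (probability_le1 _ mA)) ?ltey.
Qed.

Lemma PI2 A B a b : measurable A -> measurable B ->
  (a%:E <= P A)%E -> (b%:E <= P B)%E -> ((a + b - 1)%:E <= P (A `&` B))%E.
Proof.
move=> mA mB hA hB.
have fA : (P A < +oo)%E by rewrite (PE _ mA) // ltey.
have U : P (A `|` B) = (P A + P B - P (A `&` B))%E by exact: measureUfinl.
have hU := probability_le1 P (measurableU _ _ mA mB).
move: U hU hA hB.
rewrite (PE _ (measurableU _ _ mA mB)) (PE _ mA) (PE _ mB) (PE _ (measurableI A B mA mB)).
move: (fine _) (fine _) (fine _) (fine _) => u x y z.
rewrite -EFinN -!EFinD; case=> e h1 h2 h3.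
move: h1 h2 h3; rewrite !lee_fin => h1 h2 h3; lra.
Qed.

Lemma PC_le C b : measurable C -> (b%:E <= P C)%E -> (P (~` C) <= (1 - b)%:E)%E.
Proof.
move=> mC; rewrite probability_setC // (PE _ mC) -EFinB !lee_fin => *; lra.
Qed.

Lemma PC_ge A b : measurable A -> (P A <= b%:E)%E -> ((1 - b)%:E <= P (~` A))%E.
Proof.
move=> mA; rewrite probability_setC // (PE _ mA) -EFinB !lee_fin => *; lra.
Qed.


Lemma emp_mono m (Z : 'I_m -> Omega -> X * Y) w t1 t2 : t1 <= t2 ->
  emp_frac s Ztr Z w t1 <= emp_frac s Ztr Z w t2.
Proof. exact: (@ef_mono R m (fun i => shat s Ztr w (Z i w))). Qed.

Lemma emp_ge0 m (Z : 'I_m -> Omega -> X * Y) w t : 0 <= emp_frac s Ztr Z w t.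
Proof. exact: (@ef_ge0 R m (fun i => shat s Ztr w (Z i w))). Qed.

Lemma emp_le1 m (Z : 'I_m -> Omega -> X * Y) w t : (0 < m)%N -> emp_frac s Ztr Z w t <= 1.
Proof. exact: (@ef_le1 R m (fun i => shat s Ztr w (Z i w))). Qed.

Lemma qchar m (Z : 'I_m -> Omega -> X * Y) phi w t : (0 < m)%N -> 0 < phi <= 1 ->
  (qhat phi s Ztr Z w <= t) = (phi <= emp_frac s Ztr Z w t).
Proof. by move=> m0 hp; exact: (@ef_char R m (fun j => shat s Ztr w (Z j w)) phi m0 hp t). Qed.

Lemma qS m (Z : 'I_m -> Omega -> X * Y) phi w : (0 < m)%N -> 0 < phi <= 1 ->
  has_lbound [set t | phi <= emp_frac s Ztr Z w t] /\
  [set t | phi <= emp_frac s Ztr Z w t] !=set0.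
Proof. exact: (@ef_S R m (fun j => shat s Ztr w (Z j w)) phi). Qed.

Lemma mqhat m (Z : 'I_m -> Omega -> X * Y) phi : (0 < m)%N -> 0 < phi <= 1 ->
  (forall i, measurable_fun setT (Z i)) -> measurable_fun setT (qhat phi s Ztr Z).
Proof.
move=> m0 hp mZi; apply: (measurability _ (RGenOInfty.measurableE R)) => //.
move=> /= _ [_ [a ->] <-]; apply: measurableI => //.
have -> : qhat phi s Ztr Z @^-1` `]a, +oo[%classic =
    ~` [set w | phi <= emp_frac s Ztr Z w a].
  apply/seteqP; split => w /=; rewrite in_itv /= andbT.
    by move=> aQ; rewrite -qchar // leNgt aQ.
  by move=> H; rewrite ltNge qchar //; apply/negP.
apply: measurableC; apply: mset_le; first exact: measurable_cst.
exact: (memp m Z (fun _ => a) mZi (measurable_cst a)).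
Qed.

End Aux.

Theorem theorem2p2 (R : realType) (dO dX dY : measure_display)
  (Omega : measurableType dO) (X : measurableType dX) (Y : measurableType dY)
  (P : probability Omega R) (ntrain ncal ntest : nat)
  (Ztr : 'I_ntrain -> Omega -> X * Y) (Zcal : 'I_ncal -> Omega -> X * Y)
  (Ztest : 'I_ntest -> Omega -> X * Y) (Zstar : Omega -> X * Y)
  (s : ntrain.-tuple (X * Y) -> X * Y -> R)
  (alpha eps_cal delta_cal eps_test delta_test : R) :
  (0 < ntrain)%N -> (0 < ncal)%N -> (0 < ntest)%N ->
  (forall i, measurable_fun setT (Ztr i)) ->
  (forall i, measurable_fun setT (Zcal i)) ->
  (forall i, measurable_fun setT (Ztest i)) ->
  measurable_fun setT Zstar ->
  (forall i, same_law P (Ztr i) Zstar) ->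
  (forall i, same_law P (Zcal i) Zstar) ->
  (forall i, same_law P (Ztest i) Zstar) ->
  sample_indep P Ztr Zcal Ztest Zstar ->
  measurable_fun setT (fun p : ntrain.-tuple (X * Y) * (X * Y) => s p.1 p.2) ->
  0 < alpha < 1 ->
  0 < eps_cal < 1 -> 0 < delta_cal < 1 ->
  0 < eps_test < 1 -> 0 < delta_test < 1 ->
  (* (i) concentration over calibration data *)
  (forall q : ntrain.-tuple (X * Y) -> R, measurable_fun setT q ->
     (P [set w | (`| emp_frac s Ztr Zcal w (q (train_data Ztr w))
                    - Pq_train P s Ztr Zstar q w | <= eps_cal)%R]
      >= (1 - delta_cal)%R%:E)%E) ->
  (* (ii) concentration over test data *)
  (forall q : ntrain.-tuple (X * Y) -> R, measurable_fun setT q ->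
     (P [set w | (`| Pq_train P s Ztr Zstar q w
                    - emp_frac s Ztr Ztest w (q (train_data Ztr w)) | <= eps_test)%R]
      >= (1 - delta_test)%R%:E)%E) ->
  let eta := eps_cal + eps_test in
  let coverage := fun w : Omega =>
    ntest%:R^-1 * \sum_(i < ntest)
      (((Ztest i w).2 \in conf_set (1 - alpha) s Ztr Zcal w (Ztest i w).1) : bool)%:R in
  (P [set w | (coverage w >= 1 - alpha - eta)%R] >= (1 - delta_cal - delta_test)%R%:E)%E
  /\
  ({ae P, forall w, forall t : R,
      P [set w' | s (train_data Ztr w) (Zstar w') = t] = 0%E} ->
   (P [set w | (`| coverage w - (1 - alpha) | <= eta)%R]
    >= (1 - 2 * delta_cal - 2 * delta_test)%R%:E)%E).
Proof.
move=> ntr0 ncal0 ntest0 mZtr mZcal mZtest mZ _ _ _ _ ms /andP[a0 a1]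
  /andP[ec0 ec1] /andP[dc0 dc1] /andP[et0 et1] /andP[dt0 dt1] Hcal Htest eta coverage.
have Qp := Q_props P ntrain Zstar s mZ ms.
have Qm := Q_meas P ntrain Zstar s mZ ms.
have Fl := F_lc P ntrain Zstar s mZ ms.
have mPq' := mPq P ntrain Ztr Zstar s mZtr mZ ms.
have memp' := memp ntrain Ztr s mZtr ms.
have mtr := mtrain ntrain Ztr mZtr.
have hphi : 0 < 1 - alpha <= 1 by apply/andP; split; lra.
have covE w : coverage w = emp_frac s Ztr Ztest w (qhat (1 - alpha) s Ztr Zcal w).
  rewrite /coverage /emp_frac; congr (_ * _); apply: eq_bigr => i _.
  rewrite /conf_set; do 2 apply: congr1; apply/idP/idP => [/set_mem /=|H].
    by rewrite -surjective_pairing.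
  by apply/mem_set => /=; rewrite -surjective_pairing.
have mq := mqhat ntrain Ztr s mZtr ms ncal Zcal (1 - alpha) ncal0 hphi mZcal.
have mcov : measurable_fun setT coverage.
  have -> : coverage = fun w => emp_frac s Ztr Ztest w (qhat (1 - alpha) s Ztr Zcal w).
    by apply/funext => w; rewrite covE.
  exact: memp'.
have G1m : measurable [set w | 1 - alpha - eta <= coverage w].
  by apply: mset_le => //; exact: measurable_cst.
have LB : exists2 E, measurable E /\ ((1 - delta_cal - delta_test)%:E <= P E)%E
          & E `<=` [set w | 1 - alpha - eta <= coverage w].
  pose c := 1 - alpha - eps_cal.
  have cE : c = 1 - alpha - eps_cal by [].
  have [c0|c0] := leP c 0.
    exists setT; last first.
      move=> w _ /=; rewrite covE.
      have := emp_ge0 ntrain Ztr s ntest Ztest w (qhat (1 - alpha) s Ztr Zcal w).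
      rewrite /eta; lra.
    by split => //; rewrite probability_setT lee_fin; lra.
  have c01 : 0 < c < 1 by apply/andP; split; lra.
  pose q0 := Qc P ntrain Zstar s c.
  have mq0 : measurable_fun setT q0 := Qm c c01.
  pose qk (k : nat) x := q0 x - k.+1%:R^-1.
  have mqk k : measurable_fun setT (qk k).
    by apply: measurable_funB => //; exact: measurable_cst.
  pose A k := [set w | 1 - alpha <= emp_frac s Ztr Zcal w (qk k (train_data Ztr w))].
  have mA k : measurable (A k).
    apply: mset_le; first exact: measurable_cst.
    apply: memp' => //; exact: measurableT_comp (mqk k) mtr.
  pose C k := [set w | `|emp_frac s Ztr Zcal w (qk k (train_data Ztr w))
                 - Pq_train P s Ztr Zstar (qk k) w| <= eps_cal].
  have mC k : measurable (C k).
    apply: mset_le; last exact: measurable_cst.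
    apply: measurableT_comp => //; apply: measurable_funB.
      apply: memp' => //; exact: measurableT_comp (mqk k) mtr.
    exact: mPq'.
  have AC k : A k `<=` ~` C k.
    move=> w; rewrite /A /C /= => hA hC.
    have [_ h2 _] := Qp c (train_data Ztr w) c01.
    have lt : qk k (train_data Ztr w) < q0 (train_data Ztr w).
      by rewrite /qk ltrBlDr ltrDl invr_gt0 ltr0n.
    have hF := h2 _ lt.
    have e1 : Pq_train P s Ztr Zstar (qk k) w
      = Fm P ntrain Zstar s (train_data Ztr w) (qk k (train_data Ztr w)) by [].
    move: hC; rewrite ler_norml => /andP [_ h]; lra.
  have PA k : (P (A k) <= delta_cal%:E)%E.
    apply: (@le_trans _ _ (P (~` C k))).
      apply: le_measure; rewrite ?inE; [exact: mA|exact: measurableC (mC k)|exact: AC].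
    have := PC_le P (C k) (1 - delta_cal) (mC k) (Hcal _ (mqk k)).
    by rewrite (_ : 1 - (1 - delta_cal) = delta_cal) //; ring.
  have ndA : nondecreasing_seq A.
    move=> n m nm; apply/subsetPset => w; rewrite /A /= => H.
    apply: (le_trans H); apply: emp_mono.
    by rewrite /qk lerD2l lerN2 lef_pV2 ?posrE ?ltr0n // ler_nat ltnS.
  have mU : measurable (\bigcup_k A k) by exact: bigcup_measurable.
  have cvA := nondecreasing_cvg_mu (mu:=P) mA mU ndA.
  have PU : (P (\bigcup_k A k) <= delta_cal%:E)%E.
    by apply: (cvge_to_le cvA); apply: nearW => k; exact: PA.
  pose Ecal := ~` \bigcup_k A k.
  have mEcal : measurable Ecal by exact: measurableC.
  have PEcal : ((1 - delta_cal)%:E <= P Ecal)%E := PC_ge P _ _ mU PU.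
  pose Etest := [set w | `|Pq_train P s Ztr Zstar q0 w
                  - emp_frac s Ztr Ztest w (q0 (train_data Ztr w))| <= eps_test].
  have mEtest : measurable Etest.
    apply: mset_le; last exact: measurable_cst.
    apply: measurableT_comp => //; apply: measurable_funB; first exact: mPq'.
    apply: memp' => //; exact: measurableT_comp mq0 mtr.
  have PEtest := Htest q0 mq0.
  exists (Ecal `&` Etest).
    split; first exact: measurableI.
    have := PI2 P _ _ _ _ mEcal mEtest PEcal PEtest.
    by rewrite (_ : 1 - delta_cal + (1 - delta_test) - 1 = 1 - delta_cal - delta_test) //; ring.
  move=> w [hcal htest] /=.
  have [h1 _ _] := Qp c (train_data Ztr w) c01.
  have q0le : q0 (train_data Ztr w) <= qhat (1 - alpha) s Ztr Zcal w.
    have [lbS neS] := qS ntrain Ztr s ncal Zcal (1 - alpha) w ncal0 hphi.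
    rewrite /qhat; apply: lb_le_inf; first exact: neS.
    move=> t /= Ht.
    rewrite leNgt; apply/negP => /ltr_add_invr [k Hk].
    apply: hcal; exists k => //; rewrite /A /=.
    apply: (le_trans Ht); apply: emp_mono.
    by rewrite /qk lerBrDr ltW.
  move: htest; rewrite /Etest /= ler_norml => /andP [ht1 ht2].
  have := emp_mono ntrain Ztr s ntest Ztest w _ _ q0le.
  have e1 : Pq_train P s Ztr Zstar q0 w
      = Fm P ntrain Zstar s (train_data Ztr w) (q0 (train_data Ztr w)) by [].
  rewrite covE /eta; lra.
split.
  case: LB => E [mE PE1] EG; apply: (le_trans PE1).
  by apply: le_measure; rewrite ?inE.
move=> [N [mN PN sN]].
have mG2 : measurable [set w | `|coverage w - (1 - alpha)| <= eta].
  apply: mset_le; last exact: measurable_cst.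
  apply: measurableT_comp => //; apply: measurable_funB => //; exact: measurable_cst.
case: LB => E [mE PE1] EG.
pose c' := 1 - alpha + eps_cal.
have cE : c' = 1 - alpha + eps_cal by [].
have [c1|c1] := leP 1 c'.
  apply: (@le_trans _ _ (P E)).
    by apply: le_trans PE1; rewrite lee_fin; lra.
  apply: le_measure; rewrite ?inE //.
  move=> w /EG /= h.
  have := emp_le1 ntrain Ztr s ntest Ztest w (qhat (1 - alpha) s Ztr Zcal w) ntest0.
  rewrite -covE => h2; rewrite ler_norml; apply/andP; split; rewrite /eta in h *; lra.
have c01 : 0 < c' < 1 by apply/andP; split; lra.
pose q1 := Qc P ntrain Zstar s c'.
have mq1 : measurable_fun setT q1 := Qm c' c01.
pose C1 := [set w | `|emp_frac s Ztr Zcal w (q1 (train_data Ztr w))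
                 - Pq_train P s Ztr Zstar q1 w| <= eps_cal].
pose T1 := [set w | `|Pq_train P s Ztr Zstar q1 w
                  - emp_frac s Ztr Ztest w (q1 (train_data Ztr w))| <= eps_test].
have mC1 : measurable C1.
  apply: mset_le; last exact: measurable_cst.
  apply: measurableT_comp => //; apply: measurable_funB; last exact: mPq'.
  apply: memp' => //; exact: measurableT_comp mq1 mtr.
have mT1 : measurable T1.
  apply: mset_le; last exact: measurable_cst.
  apply: measurableT_comp => //; apply: measurable_funB; first exact: mPq'.
  apply: memp' => //; exact: measurableT_comp mq1 mtr.
have PNc : (1%:E <= P (~` N))%E.
  by rewrite probability_setC // PN sube0.
have P3 := PI2 P _ _ _ _ (measurableI _ _ mC1 mT1) (measurableC mN)
  (PI2 P _ _ _ _ mC1 mT1 (Hcal q1 mq1) (Htest q1 mq1)) PNc.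
have P4 := PI2 P _ _ _ _ mE (measurableI _ _ (measurableI _ _ mC1 mT1) (measurableC mN)) PE1 P3.
apply: (@le_trans _ _ (P (E `&` (C1 `&` T1 `&` ~` N)))).
  apply: le_trans P4; rewrite lee_fin; lra.
apply: le_measure; rewrite ?inE //.
  exact: (measurableI _ _ mE (measurableI _ _ (measurableI _ _ mC1 mT1) (measurableC mN))).
move=> w [/EG /= hlow [[hc ht] hN]].
have hat : forall t, P [set w' | s (train_data Ztr w) (Zstar w') = t] = 0%E.
  have [//|nphi] := pselect (forall t, P [set w' | s (train_data Ztr w) (Zstar w') = t] = 0%E).
  by exfalso; apply: hN; apply: sN.
have [h1 h2 _] := Qp c' (train_data Ztr w) c01.
have hF : Fm P ntrain Zstar s (train_data Ztr w) (q1 (train_data Ztr w)) <= c'.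
  apply: Fl; first exact: hat.
  move=> k; apply/ltW/h2.
  by rewrite ltrBlDr ltrDl invr_gt0 ltr0n.
have e1 : Pq_train P s Ztr Zstar q1 w
    = Fm P ntrain Zstar s (train_data Ztr w) (q1 (train_data Ztr w)) by [].
move: hc ht; rewrite /C1 /T1 /= !ler_norml => /andP [hc1 hc2] /andP [ht1 ht2].
have qle : qhat (1 - alpha) s Ztr Zcal w <= q1 (train_data Ztr w).
  rewrite qchar //; lra.
have := emp_mono ntrain Ztr s ntest Ztest w _ _ qle.
rewrite -covE /= => hm; apply/andP; split; rewrite /eta in hlow *; lra.
Qed.
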